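(* Let $k\geq1$ and let $w$ be a reduced word on $\{\alpha_k^{\pm1},\dots,\alpha_1^{\pm1},\beta^{\pm1}\}$. For every finite subset $F$ of the vertex set $X$ of the pre-graph $G_0$, there is an extension $G$ of $G_0$ (with labels in $\{\alpha_k^{\pm1},\dots,\alpha_1^{\pm1},\beta^{\pm1}\}$) such that the path $P(w,v_0)$ embeds in $G$, the image of $P(w,v_0)$ in $G$ contains no vertex of $F$, and $G\setminus G_0$ (the set of edges of $G$ not in $G_0$) is finite.
   Context: A graph consists of a vertex set $V$, an edge set $E$, a fixed-point-free involution $e\mapsto\bar e$ on $E$, and maps $i,t:E\to V$ (initial and terminal vertex) with $i(\bar e)=t(e)$. A labeling on $S^{\pm1}=S\cup S^{-1}$ is a map $l:E\to S^{\pm1}$ with $l(\bar e)=l(e)^{-1}$. A labeled graph is well-labeled if $i(e)=i(e')$ and $l(e)=l(e')$ imply $e=e'$. A homomorphism of labeled graphs maps vertices to vertices and edges to edges, preserving $i$, $t$ and labels; an embedding is an injective homomorphism. A word $w_m\cdots w_1$ is reduced if $w_{j+1}\neq w_j^{-1}$ for all $j$. For a reduced word $w=w_m\cdots w_1$, the path $P(w,v_0)$ is the labeled graph with $m+1$ distinct vertices $v_0,v_1,\dots,v_m$ and directed edges $e_1,\dots,e_m$ (together with their inverses) where $e_j$ goes from $v_{j-1}$ to $v_j$ and has label $w_j$. Let $X$ be an infinite countable set and $\beta$ a permutation of $X$ acting simply transitively (so $X\cong\mathbb{Z}$ and $\beta$ is $x\mapsto x+1$). The pre-graph $G_0$ has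 vertex set $X$ and, for each $x\in X$, one directed edge from $x$ to $\beta(x)$ labeled $\beta$ (together with its inverse edge, labeled $\beta^{-1}$). An extension of $G_0$ is a well-labeled graph labeled on $\{\alpha_k^{\pm1},\dots,\alpha_1^{\pm1},\beta^{\pm1}\}$ which contains $G_0$ and has vertex set exactly $X$. *)

(* Defs.v *)
From Stdlib Require Import List.
From mathcomp Require Import all_boot all_order all_algebra.
Set Implicit Arguments. Unset Strict Implicit. Unset Printing Implicit Defensive.
Import GRing.Theory Num.Theory.

(* Generators: [None] is beta, [Some i] (i : 'I_k) is alpha_(i+1).
   A letter is a generator together with an exponent sign:
   (g, true) = g, (g, false) = g^{-1}. *)
Definition gen (k : nat) := option 'I_k.
Definition letter (k : nat) := (gen k * bool)%type.
Definition linv {k : nat} (a : letter k) : letter k := (a.1, ~~ a.2).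
Definition beta_l {k : nat} : letter k := (None, true).

Record lgraph (k : nat) (V : Type) := LGraph {
  edge : Type;
  ebar : edge -> edge;
  src : edge -> V;
  tgt : edge -> V;
  lab : edge -> letter k;
  ebarK : forall e, ebar (ebar e) = e;
  ebar_nofix : forall e, ebar e <> e;
  src_bar : forall e, src (ebar e) = tgt e;
  lab_bar : forall e, lab (ebar e) = linv (lab e) }.

Arguments edge {k V} _.
Arguments ebar {k V} _ _.
Arguments src {k V} _ _.
Arguments tgt {k V} _ _.
Arguments lab {k V} _ _.

Definition well_labeled {k : nat} {V : Type} (G : lgraph k V) : Prop :=
  forall e e' : edge G, src G e = src G e' -> lab G e = lab G e' -> e = e'.

Definition is_hom {k : nat} {V W : Type} (G : lgraph k V) (H : lgraph k W)
  (fV : V -> W) (fE : edge G -> edge H) : Prop :=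
  forall e : edge G,
    src H (fE e) = fV (src G e) /\ tgt H (fE e) = fV (tgt G e) /\
    lab H (fE e) = lab G e.
Arguments is_hom {k V W} G H fV fE.

Definition is_embedding {k : nat} {V W : Type} (G : lgraph k V) (H : lgraph k W)
  (fV : V -> W) (fE : edge G -> edge H) : Prop :=
  is_hom G H fV fE /\ injective fV /\ injective fE.
Arguments is_embedding {k V W} G H fV fE.

(* Reduced words. The list [w] = [:: w_1; ...; w_m] stores the word
   w_m ... w_1 in reading order of the path (w_1 first). *)
Definition reduced {k : nat} (w : seq (letter k)) : Prop :=
  forall j, j.+1 < size w -> nth beta_l w j.+1 <> linv (nth beta_l w j).

(* The path P(w, v_0): vertices v_0..v_m = 'I_m.+1, edge (j, true) goes from
   v_j to v_(j+1) with label w_(j+1); (j, false) is its inverse edge. *)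
Section Path.
Variables (k : nat) (w : seq (letter k)).
Let m := size w.
Definition pedge := ('I_m * bool)%type.
Definition pbar (e : pedge) : pedge := (e.1, ~~ e.2).
Definition psrc (e : pedge) : 'I_m.+1 :=
  if e.2 then inord e.1 else inord e.1.+1.
Definition ptgt (e : pedge) : 'I_m.+1 :=
  if e.2 then inord e.1.+1 else inord e.1.
Definition plab (e : pedge) : letter k :=
  if e.2 then nth beta_l w e.1 else linv (nth beta_l w e.1).
Lemma pbarK e : pbar (pbar e) = e. Proof. by case: e => a []. Qed.
Lemma pbar_nofix e : pbar e <> e. Proof. by case: e => a [] []. Qed.
Lemma psrc_bar e : psrc (pbar e) = ptgt e. Proof. by case: e => a []. Qed.
Lemma plab_bar e : plab (pbar e) = linv (plab e).
Proof. case: e => a [] //=; rewrite /plab /=; case: (nth _ _ _) => g b //=; by rewrite /linv /= negbK. Qed.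
Definition path_graph : lgraph k 'I_m.+1 :=
  @LGraph k 'I_m.+1 pedge pbar psrc ptgt plab pbarK pbar_nofix psrc_bar plab_bar.
End Path.

(* The pre-graph G_0 on X = int, beta acting as x |-> x + 1:
   edge (x, true) goes from x to x+1 labeled beta, (x, false) is its inverse. *)
Section PreGraph.
Variable k : nat.
Definition g0edge := (int * bool)%type.
Definition g0bar (e : g0edge) : g0edge := (e.1, ~~ e.2).
Definition g0src (e : g0edge) : int := if e.2 then e.1 else (e.1 + 1)%R.
Definition g0tgt (e : g0edge) : int := if e.2 then (e.1 + 1)%R else e.1.
Definition g0lab (e : g0edge) : letter k := (None, e.2).
Lemma g0barK e : g0bar (g0bar e) = e. Proof. by case: e => a []. Qed.
Lemma g0bar_nofix e : g0bar e <> e. Proof. by case: e => a [] []. Qed.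
Lemma g0src_bar e : g0src (g0bar e) = g0tgt e. Proof. by case: e => a []. Qed.
Lemma g0lab_bar e : g0lab (g0bar e) = linv (g0lab e). Proof. by case: e => a []. Qed.
Definition G0 : lgraph k int :=
  @LGraph k int g0edge g0bar g0src g0tgt g0lab g0barK g0bar_nofix g0src_bar g0lab_bar.
End PreGraph.

Definition extension_via {k : nat} (G : lgraph k int) (incl : edge (G0 k) -> edge G) : Prop :=
  well_labeled G /\ is_embedding (G0 k) G id incl.

Definition finite_complement {k : nat} (G : lgraph k int) (incl : edge (G0 k) -> edge G) : Prop :=
  exists l : list (edge G), forall e : edge G, (forall e0, incl e0 <> e) -> In e l.
Arguments extension_via {k} G incl.
Arguments finite_complement {k} G incl.

(* Main.v *)
Require Import Defs.
From mathcomp Require Import all_boot all_order all_algebra ring lra zify.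
Set Implicit Arguments. Unset Strict Implicit. Unset Printing Implicit Defensive.
Import Order.TTheory GRing.Theory Num.Theory.

Definition isal {k} (a : letter k) : bool := a.1 != None.
Definition sg {k} (a : letter k) : int :=
  if isal a then 0%R else if a.2 then 1%R else (-1)%R.
Definition cnt {k} (w : seq (letter k)) (i j : nat) : nat :=
  \sum_(i <= t < j) isal (nth beta_l w t).
Definition ssg {k} (w : seq (letter k)) (i j : nat) : int :=
  (\sum_(i <= t < j) sg (nth beta_l w t))%R.
Definition LL {k} (w : seq (letter k)) : int := ((size w)%:Z + 1)%R.
Definition pp {k} (w : seq (letter k)) (B : int) (j : nat) : int :=
  (B + LL w * (cnt w 0 j)%:R + ssg w 0 j)%R.

Lemma pp_diff k (w : seq (letter k)) B i j : i <= j ->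
  (pp w B j - pp w B i = LL w * (cnt w i j)%:R + ssg w i j)%R.
Proof.
move=> hij; rewrite /pp /cnt /ssg.
rewrite (@big_cat_nat _ _ _ i 0 j) // (@big_cat_nat _ _ _ i 0 j) //=.
rewrite natrD mulrDr; ring.
Qed.

Lemma sg_norm k (a : letter k) : (`|sg a| <= 1)%R.
Proof. by rewrite /sg; case: (isal a) => //; case: a.2. Qed.

Lemma ssg_norm k (w : seq (letter k)) i j : i <= j -> (`|ssg w i j| <= (j - i)%:R)%R.
Proof.
move=> hij; rewrite /ssg; apply: le_trans (ler_norm_sum _ _ _) _.
rewrite -sumr_const_nat; apply: ler_sum => t _; exact: sg_norm.
Qed.

Lemma cnt_cases k (w : seq (letter k)) i j : i <= j ->
  (forall t, i <= t < j -> ~~ isal (nth beta_l w t)) \/ 0 < cnt w i j.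
Proof.
move=> hij; elim: j hij => [|j IH] hij.
  by left => t; lia.
case: (ltngtP i j.+1) hij => // [hlt|heq] _.
- have [H|H] := IH hlt.
  + case hb: (isal (nth beta_l w j)).
    * right; rewrite /cnt big_nat_recr //= hb; lia.
    * left => t ht; have [ht2|->] : t < j \/ t = j by lia.
        by apply: H; lia.
      by rewrite hb.
  + right; rewrite /cnt big_nat_recr //=; rewrite /cnt in H; lia.
- by left => t; lia.
Qed.

Lemma beta_const k (w : seq (letter k)) (hw : reduced w) i j : j <= size w ->
  (forall t, i <= t < j -> ~~ isal (nth beta_l w t)) ->
  forall t, i <= t < j -> nth beta_l w t = nth beta_l w i.
Proof.
move=> hj H t /andP [hit htj].
elim: t hit htj => [|t IH] hit htj.
  by have -> : i = 0 by lia.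
case: (ltngtP i t.+1) hit => // [hlt|heq] _; last by rewrite heq.
have IH' := IH ltac:(lia) ltac:(lia).
have h1 := H t ltac:(lia); have h2 := H t.+1 ltac:(lia).
have hr := hw t ltac:(lia).
rewrite -IH'; move: h1 h2 hr; rewrite /isal /linv.
case: (nth beta_l w t) => [[g|] b]; case: (nth beta_l w t.+1) => [[g'|] b'] //= _ _.
by case: b; case: b'.
Qed.

Lemma pp_lt k (w : seq (letter k)) (hw : reduced w) B i j :
  i < j -> j <= size w -> pp w B i != pp w B j.
Proof.
move=> hij hj; apply/negP => /eqP he.
have hd := pp_diff w B (ltnW hij).
rewrite he subrr in hd.
have hn := ssg_norm w (ltnW hij).
have [H|H] := cnt_cases w (ltnW hij).
- have hc := beta_const hw hj H.
  have hs : ssg w i j = (sg (nth beta_l w i) *+ (j - i))%R.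
    rewrite /ssg -sumr_const_nat; apply: eq_big_nat => t ht; by rewrite hc.
  have hi := H i ltac:(lia).
  have : cnt w i j = 0.
    rewrite /cnt big_nat_cond big1 // => t; rewrite andbT => ht.
    by rewrite (negbTE (H t ht)).
  move=> hc0; rewrite hc0 mulr0 add0r hs in hd.
  move: hd hi; rewrite /sg; case: (isal _) => //= hd _.
  have hji : (0 < j - i)%N by lia.
  move: hd; case: (nth beta_l w i).2.
  + move/eqP; rewrite eq_sym mulrn_eq0 oner_eq0 orbF; lia.
  + move/eqP; rewrite eq_sym mulrn_eq0 oppr_eq0 oner_eq0 orbF; lia.
- have hL : (LL w * (cnt w i j)%:R >= LL w)%R.
    rewrite -{1}(mulr1 (LL w)); apply: ler_wpM2l; first by rewrite /LL.
    by rewrite ler1n.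
  have : (- ssg w i j <= (j - i)%:R)%R.
    by apply: le_trans (ler_norm _) _; rewrite normrN.
  have : ((j - i)%:R <= (size w)%:R :> int)%R by rewrite ler_nat; lia.
  move: hL hd; rewrite /LL. lra.
Qed.

Lemma pp_inj k (w : seq (letter k)) (hw : reduced w) B i j :
  i <= size w -> j <= size w -> pp w B i = pp w B j -> i = j.
Proof.
move=> hi hj he; case: (ltngtP i j) => // h.
- by move: (pp_lt hw B h hj); rewrite he eqxx.
- by move: (pp_lt hw B h hi); rewrite he eqxx.
Qed.

Lemma pp_lower k (w : seq (letter k)) B j : j <= size w ->
  (B - (size w)%:R <= pp w B j)%R.
Proof.
move=> hj; rewrite /pp.
have hn := ssg_norm w (leq0n j).
have : (- ssg w 0 j <= (j - 0)%:R)%R.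
  by apply: le_trans (ler_norm _) _; rewrite normrN.
have : ((j - 0)%:R <= (size w)%:R :> int)%R by rewrite ler_nat; lia.
have : (0 <= LL w * (cnt w 0 j)%:R)%R by apply: mulr_ge0; rewrite /LL.
lra.
Qed.

Lemma pp_succ_beta k (w : seq (letter k)) B j s :
  nth beta_l w j = (None, s) ->
  pp w B j.+1 = (pp w B j + (if s then 1 else -1))%R.
Proof.
move=> hs; have := pp_diff w B (leqnSn j).
rewrite /cnt /ssg !big_nat1 hs /sg /isal /= mulr0 add0r => <-.
ring.
Qed.
Definition AE k (w : seq (letter k)) := {e : pedge w | isal (nth beta_l w e.1)}.
Definition Gedge k (w : seq (letter k)) := (g0edge + AE w)%type.
Definition Gbar k (w : seq (letter k)) (e : Gedge w) : Gedge w :=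
  match e with
  | inl e => inl (g0bar e)
  | inr a => inr (exist _ (pbar (val a)) (valP a))
  end.
Definition Gsrc k (w : seq (letter k)) B (e : Gedge w) : int :=
  match e with
  | inl e => g0src e
  | inr a => pp w B (psrc (val a))
  end.
Definition Gtgt k (w : seq (letter k)) B (e : Gedge w) : int :=
  match e with
  | inl e => g0tgt e
  | inr a => pp w B (ptgt (val a))
  end.
Definition Glab k (w : seq (letter k)) (e : Gedge w) : letter k :=
  match e with
  | inl e => g0lab k e
  | inr a => plab (val a)
  end.
Lemma GbarK k (w : seq (letter k)) (e : Gedge w) : Gbar (Gbar e) = e.
Proof. case: e => [e|[e he]] /=; first by rewrite g0barK. by congr inr; apply: val_inj; rewrite /= pbarK. Qed.
Lemma Gbar_nofix k (w : seq (letter k)) (e : Gedge w) : Gbar e <> e.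
Proof. case: e => [e|[e he]] /= [] h; first exact: (g0bar_nofix h). exact: (pbar_nofix h). Qed.
Lemma Gsrc_bar k (w : seq (letter k)) B (e : Gedge w) : Gsrc B (Gbar e) = Gtgt B e.
Proof. case: e => [e|[e he]] /=; first exact: g0src_bar. by rewrite psrc_bar. Qed.
Lemma Glab_bar k (w : seq (letter k)) (e : Gedge w) : Glab (Gbar e) = linv (Glab e).
Proof. case: e => [e|[e he]] /=; first exact: g0lab_bar. exact: plab_bar. Qed.
Definition GG k (w : seq (letter k)) B : lgraph k int :=
  @LGraph k int (Gedge w) (@Gbar k w) (Gsrc B) (Gtgt B) (@Glab k w)
    (@GbarK k w) (@Gbar_nofix k w) (@Gsrc_bar k w B) (@Glab_bar k w).

Lemma mem_In (T : eqType) (x : T) (s : seq T) : x \in s -> List.In x s.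
Proof. elim: s => //= y s IH; rewrite inE => /orP [/eqP ->|h]; [by left|by right; apply: IH]. Qed.

Lemma le_sumabs (F : seq int) x : x \in F -> (x <= \sum_(y <- F) `|y|)%R.
Proof.
elim: F => //= y F IH; rewrite inE big_cons => /orP [/eqP ->|h].
  have : (0 <= \sum_(y <- F) `|y|)%R by apply: sumr_ge0 => i _.
  have := ler_norm y; lra.
have := IH h; have := normr_ge0 y; lra.
Qed.

Lemma psrc_val k (w : seq (letter k)) (e : pedge w) :
  val (psrc e) = if e.2 then val e.1 else (val e.1).+1.
Proof. case: e => [[j hj] []] /=; rewrite inordK //=; lia. Qed.
Lemma ptgt_val k (w : seq (letter k)) (e : pedge w) :
  val (ptgt e) = if e.2 then (val e.1).+1 else val e.1.
Proof. case: e => [[j hj] []] /=; rewrite inordK //=; lia. Qed.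

Lemma plab_fst k (w : seq (letter k)) (e : pedge w) :
  (plab e).1 = (nth beta_l w e.1).1.
Proof. by case: e => [j []]. Qed.

Definition fE k (w : seq (letter k)) B (e : pedge w) : Gedge w :=
  match insub e with
  | Some a => inr a
  | None => inl (pp w B (if (nth beta_l w e.1).2 then val e.1 else (val e.1).+1),
                 (nth beta_l w e.1).2 == e.2)
  end.

Theorem lemma8 (k : nat) (hk : 1 <= k) (w : seq (letter k)) (hw : reduced w)
  (F : seq int) :
  exists (G : lgraph k int) (incl : edge (G0 k) -> edge G),
    extension_via G incl /\
    finite_complement G incl /\
    exists (fV : 'I_(size w).+1 -> int) (fE : edge (path_graph w) -> edge G),
      is_embedding (path_graph w) G fV fE /\
      (forall v : 'I_(size w).+1, fV v \notin F).
Proof.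
set B : int := ((size w)%:R + 1 + \sum_(y <- F) `|y|)%R.
have ppinj : forall i j : 'I_(size w).+1, pp w B i = pp w B j -> i = j.
  move=> i j h; apply: ord_inj; apply: (pp_inj hw) h; by rewrite -ltnS.
exists (GG w B), inl.
split; [split|split].
-
  move=> [e|[e he]] [e'|[e' he']] /=.
  + case: e e' => [x b] [x' b'] /=; rewrite /g0src /g0lab /=.
    move=> hs [hb]; subst b'; case: b hs => /= hs; first by rewrite hs.
    by move/addIr: hs => ->.
  + move=> _ /(congr1 fst); rewrite plab_fst /= => h; exfalso.
    by move: he'; rewrite /isal -h.
  + move=> _ /(congr1 fst); rewrite plab_fst /= => h; exfalso.
    by move: he; rewrite /isal h.
  + move=> /ppinj /(congr1 val); rewrite !psrc_val.
    case: e e' he he' => [j b] [j' b'] /= he he'.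
    rewrite /plab /=.
    case: b; case: b' => /= hjj hl.
    * have ejj : j = j' by apply: ord_inj.
      by subst j'; congr inr; apply: val_inj.
    * exfalso; apply: (hw j'); first by rewrite -hjj ltn_ord.
      have -> : j' .+1 = j by [].
      by rewrite hl.
    * exfalso; apply: (hw j); first by rewrite hjj ltn_ord.
      by rewrite hjj -hl.
    * have ejj : j = j' by apply: ord_inj; move: hjj => [->].
      by subst j'; congr inr; apply: val_inj.
- split; last split => //; last by move=> ? ? [].
  by move=> e.
- exists (map inr (enum {: AE w})) => [[e|a]] h.
    by case: (h e).
  by apply: mem_In; rewrite (mem_map (@inr_inj _ _)) mem_enum.
- exists (fun v => pp w B v), (@fE k w B).
  have hom : is_hom (path_graph w) (GG w B) (fun v => pp w B v) (@fE k w B).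
    move=> e; rewrite /fE; case: insubP => [a ha hv|hn] /=.
      by rewrite hv.
    rewrite /isal negbK in hn.
    case: e hn => [j b] /= hn; rewrite /plab /g0lab /= psrc_val ptgt_val /=.
    move: hn; case hs: (nth beta_l w j) => [[g|] s] //= _.
    have hsucc := pp_succ_beta B hs.
    case: s hs hsucc; case: b => /= hs ->; rewrite /g0src /g0tgt /=.
    1-4: by rewrite ?subrK; repeat split.
  split; first (split; first exact: hom); first split.
  + by move=> i j /ppinj.
  + move=> e e' h.
    have [hs1 [ht1 _]] := hom e; have [hs2 [ht2 _]] := hom e'.
    have hs : psrc e = psrc e' by apply: ppinj; rewrite -hs1 -hs2 h.
    have ht : ptgt e = ptgt e' by apply: ppinj; rewrite -ht1 -ht2 h.
    move: hs ht => /(congr1 val) + /(congr1 val); rewrite !psrc_val !ptgt_val.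
    case: e e' {h hs1 hs2 ht1 ht2} => [j b] [j' b'] /=.
    by case: b; case: b' => /= h1 h2; try lia; congr pair; apply: ord_inj; lia.
  + move=> v; apply/negP => hv.
    have := le_sumabs hv; have := pp_lower (w:=w) B (ltn_ord v : (v <= size w)%N).
    rewrite /B; lra.
Qed.
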